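(* Let $T$ be an almost reduced linear trellis of length $n$, let $i\in\mathbb{Z}_n$ and $v,w\in V_i(T)$. If there exists a directed path in $T$ from $v$ to $w$, then there exists a directed path from $v$ to $w$ of length exactly $n$. In particular, if $T$ is connected and almost reduced, then for all $v,w\in V_0(T)$ there are paths of length $n$ from $v$ to $w$ and from $w$ to $v$.
   Context: Let $\mathbb{F}$ be a finite field and $n\ge1$; indices are taken in $\mathbb{Z}_n$. A trellis $T$ of length $n$ over $\mathbb{F}$ consists of pairwise disjoint finite vertex sets $V_i(T)$, $i\in\mathbb{Z}_n$, and edge sets $E_i(T)\subseteq V_i(T)\times\mathbb{F}\times V_{i+1}(T)$; $(v,\alpha,w)\in E_i(T)$ is an edge from $v$ to $w$. Trellises are trim. $T$ is linear if each $V_i(T)$ is an $\mathbb{F}$-vector space and each $E_i(T)$ a subspace. A path of length $m$ is $v_0\alpha_0v_1\cdots\alpha_{m-1}v_m$ with each $(v_j,\alpha_j,v_{j+1})$ an edge. A cycle is a closed path of length $n$ starting in $V_0(T)$; $T$ is almost reduced if every vertex lies on some cycle (equivalently, every vertex lies on a closed path of length $n$); connected if for any two distinct vertices $v,w$ there is a directed path from $v$ to $w$. *)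

(* Defs.v *)
From HB Require Import structures.
From mathcomp Require Import all_boot all_order all_algebra all_field.
Set Implicit Arguments. Unset Strict Implicit. Unset Printing Implicit Defensive.
Import GRing.Theory.
Local Open Scope ring_scope.

(* A trellis of length n over F whose vertex spaces are finite-dimensional
   F-vector spaces V_i = F^(dim i), indexed by i : 'I_n = Z_n (successor
   ordS i = i+1 mod n).
   Vertices of T are tagged pairs (i, v) with v in V_i, so the V_i are
   pairwise disjoint by construction. *)
Record trellis (F : finFieldType) (n : nat) := Trellis {
  tdim : 'I_n -> nat;
  tedge : forall i : 'I_n, 'rV[F]_(tdim i) -> F -> 'rV[F]_(tdim (ordS i)) -> bool
}.

Section Trellis.
Variables (F : finFieldType) (n : nat) (T : trellis F n).

Definition vertex := {i : 'I_n & 'rV[F]_(tdim T i)}.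

Definition linear_trellis : Prop :=
  forall i : 'I_n,
    @tedge _ _ T i 0 0 0 /\
    (forall (c : F) v a w v' a' w',
       @tedge _ _ T i v a w -> @tedge _ _ T i v' a' w' ->
       @tedge _ _ T i (c *: v + v') (c * a + a') (c *: w + w')).

Inductive tpath : nat -> vertex -> vertex -> Prop :=
| tpath0 x : tpath 0 x x
| pathS m (i : 'I_n) (v : 'rV[F]_(tdim T i)) (a : F)
        (w : 'rV[F]_(tdim T (ordS i))) y :
    @tedge _ _ T i v a w ->
    tpath m (existT _ (ordS i) w) y ->
    tpath m.+1 (existT _ i v) y.

Definition trim : Prop :=
  forall x : vertex, (exists y, tpath 1 x y) /\ (exists y, tpath 1 y x).

Definition almost_reduced : Prop := forall x : vertex, tpath n x x.

Definition tconnected : Prop :=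
  forall x y : vertex, x <> y -> exists m, tpath m x y.

End Trellis.
Arguments tpath {F n} T _ _ _.
Arguments vertex {F n} T.
Arguments tedge {F n} t i _ _ _.

(* Main.v *)
Require Import Defs.
From HB Require Import structures.
From mathcomp Require Import all_boot all_order all_algebra all_field.
From mathcomp Require Import zify.
From Stdlib Require Import Eqdep.
Set Implicit Arguments.
Import GRing.Theory.
Local Open Scope ring_scope.

Section S.
Variables (F : finFieldType) (n : nat) (T : trellis F n).

Lemma ex_inj (i j : 'I_n) (v : 'rV[F]_(tdim T i)) (w : 'rV[F]_(tdim T j)) :
  existT (fun k => 'rV[F]_(tdim T k)) i v = existT _ j w ->
  exists e : i = j, w = eq_rect i (fun k => 'rV[F]_(tdim T k)) v j e.
Proof.
move=> H. have E := f_equal (@projT1 _ _) H. simpl in E. subst j.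
exists erefl. simpl. by have := inj_pair2 _ _ _ _ _ H.
Qed.

Lemma path0 x y : tpath T 0 x y -> x = y.
Proof. by move=> H; inversion H. Qed.

Lemma pathinv m i v y : tpath T m.+1 (existT _ i v) y ->
  exists a u, tedge T i v a u /\ tpath T m (existT _ (ordS i) u) y.
Proof.
move=> H; inversion H; subst.
have E := inj_pair2 _ _ _ _ _ H2. subst.
by eexists; eexists; split; eassumption.
Qed.

Lemma path_split a b x y : tpath T (a + b) x y ->
  exists z, tpath T a x z /\ tpath T b z y.
Proof.
elim: a x => [|a IH] x H; first by exists x; split => //; constructor.
case: x H => i v H. have [c [u [He Hp]]] := @pathinv (a + b) i v y H.
have [z [H1 H2]] := IH _ Hp. exists z; split => //.
by apply: pathS He H1.
Qed.

Lemma path_idx m x y : tpath T m x y ->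
  (val (projT1 y) = (val (projT1 x) + m) %% n)%N.
Proof.
elim => [z|k i v a w z _ _ IH] /=.
  by rewrite addn0 modn_small.
rewrite IH /= -addSnnS.
case: n i {v a w IH} => [|n'] i; first by case: i.
by rewrite /= modnDml.
Qed.

Lemma path_lin (lin : linear_trellis T) (c : F) m i j v v' w w' :
  tpath T m (existT _ i v) (existT _ j w) ->
  tpath T m (existT _ i v') (existT _ j w') ->
  tpath T m (existT _ i (c *: v + v')) (existT _ j (c *: w + w')).
Proof.
elim: m i v v' => [|m IH] i v v' H H'.
  move/path0: H => /ex_inj [e Hv]; subst j; simpl in Hv; subst w.
  move/path0: H' => /ex_inj [e Hv]. 
  rewrite (eq_irrelevance e erefl) /= in Hv; subst w'. constructor.
have [a [u [He Hp]]] := pathinv H.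
have [a' [u' [He' Hp']]] := pathinv H'.
apply: pathS ((lin i).2 c _ _ _ _ _ _ He He') _.
exact: IH.
Qed.

End S.
Local Close Scope ring_scope.

Theorem mainTheorem18 (F : finFieldType) (n : nat) (hn : 0 < n)
    (T : trellis F n) :
  linear_trellis T -> trim T -> almost_reduced T ->
  (forall (i : 'I_n) (v w : 'rV[F]_(tdim T i)),
      (exists m, tpath T m (existT _ i v) (existT _ i w)) ->
      tpath T n (existT _ i v) (existT _ i w)) /\
  (tconnected T ->
   forall v w : 'rV[F]_(tdim T (Ordinal hn)),
     tpath T n (existT _ (Ordinal hn) v) (existT _ (Ordinal hn) w) /\
     tpath T n (existT _ (Ordinal hn) w) (existT _ (Ordinal hn) v)).
Proof.
move=> lin _ ar.
have P1 : forall (i : 'I_n) (v w : 'rV[F]_(tdim T i)),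
      (exists m, tpath T m (existT _ i v) (existT _ i w)) ->
      tpath T n (existT _ i v) (existT _ i w).
  move=> i v w [m]. elim: m {-2}m (leqnn m) v w => [|M IH] m Hm v w H.
    have Hm0 : m = 0%N by lia.
    subst m. move/path0: H => /ex_inj [e Hv].
    rewrite (eq_irrelevance e erefl) /= in Hv; subst w. exact: ar.
  case: (ltnP m n) => Hmn.
    have Hi := path_idx H. simpl in Hi.
    have Hi' : (val i < n)%N by apply: ltn_ord.
    have Hm0 : m = 0%N.
      have Hi2 : (val i = (val i + m) %% n)%N := Hi.
      case: (ltnP (val i + m) n) => Hs.
        rewrite modn_small // in Hi2; lia.
      have E : (val i + m = (val i + m - n) + n)%N by lia.
      rewrite E modnDr in Hi2. rewrite modn_small in Hi2; lia.
    subst m. move/path0: H => /ex_inj [e Hv].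
    rewrite (eq_irrelevance e erefl) /= in Hv; subst w. exact: ar.
  have Em : m = (n + (m - n))%N by lia.
  rewrite Em in H. have [[j u] [H1 H2]] := @path_split _ _ _ n (m - n) _ _ H.
  have Hj := path_idx H1. simpl in Hj.
  have Hj' : j = i.
    apply: val_inj => /=. rewrite [LHS]Hj modnDr modn_small //.
  subst j.
  have H3 : tpath T n (existT _ i u) (existT _ i w).
    apply: (IH (m - n)%N) => //. lia.
  have H4 := path_lin lin 1%R H1 H3.
  have H5 := path_lin lin (-1)%R (ar (existT _ i u)) H4.
  by rewrite !scale1r scaleN1r [X in existT _ i X]addrC addrK addKr in H5.
split => // con v w.
case: (eqVneq v w) => [->|ne]; first by split; apply: ar.
split; apply: P1; apply: con => /ex_inj [e He];
  rewrite (eq_irrelevance e erefl) /= in He.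
  move/eqP: ne; apply; exact: esym He.
move/eqP: ne; apply; exact: He.
Qed.
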